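(* Fix $n\ge 2$, a dictator agent $t\in\{1,\dots,n\}$, and parameters $k\in[2,+\infty)$ and $a\in(0,1)$. Let $f$ be the mechanism that, on a profile $\mathbf{x}=(x_1,\dots,x_n)$ with $x_l=\min\mathbf{x}$, $x_r=\max\mathbf{x}$, $L=x_r-x_l$, outputs $l_1=x_t$ and $$l_2=\begin{cases} x_t+\max\left\{\frac{(1-a)k}{a}(x_t-x_l),\; x_r-x_t\right\} & \text{if } x_t\in[x_l,\,x_l+aL),\\[2pt] x_t-\max\left\{x_t-x_l,\; \frac{ak}{1-a}(x_r-x_t)\right\} & \text{if } x_t\in[x_l+aL,\,x_r].\end{cases}$$ Then $f$ is strategy-proof.
   Context: Two-facility game on a line: agent $i\in\{1,\dots,n\}$ has location $x_i\in\mathbb{R}$. A mechanism outputs two facility locations $\{l_1,l_2\}$; an agent at $y$ has cost $\min\{|l_1-y|,|l_2-y|\}$. A mechanism $f$ is strategy-proof if for every agent $i$, every profile $\mathbf{x}=\langle x_i,\mathbf{x}_{-i}\rangle$ and every $x_i'\in\mathbb{R}$, the cost of agent $i$ (at true location $x_i$) under $f(x_i,\mathbf{x}_{-i})$ is at most her cost under $f(x_i',\mathbf{x}_{-i})$. *)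

(* Defs.v *)
From Stdlib Require Import Reals Lra Lia.
Open Scope R_scope.

(* A profile of n agents: x : nat -> R, agent i (0 <= i < n) at x i.
   Only the values x 0, ..., x (n-1) are relevant. *)

Fixpoint pmin (x : nat -> R) (m : nat) : R :=
  match m with O => x O | S m' => Rmin (pmin x m') (x m) end.
Fixpoint pmax (x : nat -> R) (m : nat) : R :=
  match m with O => x O | S m' => Rmax (pmax x m') (x m) end.

Definition xl (n : nat) (x : nat -> R) : R := pmin x (n - 1).
Definition xr (n : nat) (x : nat -> R) : R := pmax x (n - 1).

Definition mech (n t : nat) (k a : R) (x : nat -> R) : R * R :=
  let l := xl n x in
  let r := xr n x in
  let L := r - l in
  let xt := x t in
  (xt,
   if Rlt_dec xt (l + a * L) then
     xt + Rmax ((1 - a) * k / a * (xt - l)) (r - xt)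
   else
     xt - Rmax (xt - l) (a * k / (1 - a) * (r - xt))).

Definition cost (p : R * R) (y : R) : R :=
  Rmin (Rabs (fst p - y)) (Rabs (snd p - y)).

Definition update (x : nat -> R) (i : nat) (v : R) : nat -> R :=
  fun j => if Nat.eqb j i then v else x j.

Definition strategy_proof (n : nat) (f : (nat -> R) -> R * R) : Prop :=
  forall (i : nat) (x : nat -> R) (v : R), (i < n)%nat ->
    cost (f x) (x i) <= cost (f (update x i v)) (x i).

(* Main.v *)
Require Import Defs.
From Stdlib Require Import Reals Lra Lia.
Open Scope R_scope.

Definition L2g (c1 c2 a l r d : R) : R :=
  if Rlt_dec d (l + a * (r - l)) then d + Rmax (c1 * (d - l)) (r - d)
  else d - Rmax (d - l) (c2 * (r - d)).

Ltac crush :=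
  unfold L2g, Rmin, Rmax, Rabs in *;
  repeat match goal with
  | |- context [Rlt_dec ?a ?b] => destruct (Rlt_dec a b)
  | |- context [Rle_dec ?a ?b] => destruct (Rle_dec a b)
  | |- context [Rcase_abs ?a] => destruct (Rcase_abs a)
  | H : context [Rcase_abs ?a] |- _ => destruct (Rcase_abs a)
  | H : context [Rle_dec ?a ?b] |- _ => destruct (Rle_dec a b)
  end; try lra.

Lemma core1 c1 c2 a l r l' r' d y :
  l <= y -> y <= d -> d <= r -> l' <= d -> d <= r' -> r <= r' ->
  (l' <= l \/ y = l) ->
  (d < l + a * (r - l) -> 2 * (d - l) <= c2 * (r - d)) ->
  c2 * (r - d) <= c2 * (r' - d) ->
  Rmin (Rabs (d - y)) (Rabs (L2g c1 c2 a l r d - y)) <=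
  Rmin (Rabs (d - y)) (Rabs (L2g c1 c2 a l' r' d - y)).
Proof.
  intros H1 H2 H3 H4 H5 H6 H7 HF Hm.
  destruct H7 as [H7|H7]; crush.
Qed.

Lemma core2 c1 c2 a l r l' r' d y :
  l <= d -> d <= y -> y <= r -> l' <= d -> d <= r' -> l' <= l ->
  (r <= r' \/ y = r) ->
  (~ d < l + a * (r - l) -> 2 * (r - d) <= c1 * (d - l)) ->
  c1 * (d - l) <= c1 * (d - l') ->
  Rmin (Rabs (d - y)) (Rabs (L2g c1 c2 a l r d - y)) <=
  Rmin (Rabs (d - y)) (Rabs (L2g c1 c2 a l' r' d - y)).
Proof.
  intros H1 H2 H3 H4 H5 H6 H7 HF Hm.
  destruct H7 as [H7|H7]; crush.
Qed.

Lemma F1 k a l r d : 0 < a < 1 -> 2 <= k -> l <= d ->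
  d < l + a * (r - l) -> 2 * (d - l) <= a * k / (1 - a) * (r - d).
Proof.
  intros Ha Hk H1 H2.
  apply Rmult_le_reg_r with (1 - a); [lra|].
  replace (a * k / (1 - a) * (r - d) * (1 - a)) with (k * (a * (r - d)))
    by (field; lra).
  assert (X : a * (r - d) > (1 - a) * (d - l)) by lra.
  assert (0 <= (1 - a) * (d - l)) by (apply Rmult_le_pos; lra).
  assert (0 <= (k - 2) * (a * (r - d))) by (apply Rmult_le_pos; lra).
  lra.
Qed.

Lemma F2 k a l r d : 0 < a < 1 -> 2 <= k -> d <= r ->
  ~ d < l + a * (r - l) -> 2 * (r - d) <= (1 - a) * k / a * (d - l).
Proof.
  intros Ha Hk H1 H2.
  apply Rmult_le_reg_r with a; [lra|].
  replace ((1 - a) * k / a * (d - l) * a) with (k * ((1 - a) * (d - l)))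
    by (field; lra).
  assert (X : (1 - a) * (d - l) >= a * (r - d)) by lra.
  assert (0 <= a * (r - d)) by (apply Rmult_le_pos; lra).
  assert (0 <= (k - 2) * ((1 - a) * (d - l))) by (apply Rmult_le_pos; lra).
  lra.
Qed.

Lemma le_pmax x N j : (j <= N)%nat -> x j <= pmax x N.
Proof.
  induction N; simpl; intros H.
  - replace j with 0%nat by lia; lra.
  - destruct (Nat.eq_dec j (S N)) as [->|Hne]; [apply Rmax_r|].
    eapply Rle_trans; [apply IHN; lia|apply Rmax_l].
Qed.

Lemma pmax_le x N c : (forall j, (j <= N)%nat -> x j <= c) -> pmax x N <= c.
Proof.
  induction N; simpl; intros H; [apply H; lia|].
  apply Rmax_lub; [apply IHN; intros; apply H; lia|apply H; lia].
Qed.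

Lemma pmax_att x N : exists j, (j <= N)%nat /\ pmax x N = x j.
Proof.
  induction N; simpl.
  - exists 0%nat; split; [lia|reflexivity].
  - destruct IHN as [j [Hj Ej]]. unfold Rmax.
    destruct (Rle_dec (pmax x N) (x (S N))).
    + exists (S N); split; [lia|reflexivity].
    + exists j; split; [lia|assumption].
Qed.

Lemma le_pmin x N j : (j <= N)%nat -> pmin x N <= x j.
Proof.
  induction N; simpl; intros H.
  - replace j with 0%nat by lia; lra.
  - destruct (Nat.eq_dec j (S N)) as [->|Hne]; [apply Rmin_r|].
    eapply Rle_trans; [apply Rmin_l|apply IHN; lia].
Qed.

Lemma pmin_le x N c : (forall j, (j <= N)%nat -> c <= x j) -> c <= pmin x N.
Proof.
  induction N; simpl; intros H; [apply H; lia|].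
  apply Rmin_glb; [apply IHN; intros; apply H; lia|apply H; lia].
Qed.

Lemma pmin_att x N : exists j, (j <= N)%nat /\ pmin x N = x j.
Proof.
  induction N; simpl.
  - exists 0%nat; split; [lia|reflexivity].
  - destruct IHN as [j [Hj Ej]]. unfold Rmin.
    destruct (Rle_dec (pmin x N) (x (S N))).
    + exists j; split; [lia|assumption].
    + exists (S N); split; [lia|reflexivity].
Qed.

Lemma mech_eq (n t : nat) (k a : R) (x : nat -> R) :
  mech n t k a x = (x t, L2g ((1 - a) * k / a) (a * k / (1 - a)) a (xl n x) (Defs.xr n x) (x t)).
Proof. reflexivity. Qed.

Theorem theorem3 (n t : nat) (k a : R) :
  (2 <= n)%nat -> (t < n)%nat -> 2 <= k -> 0 < a < 1 ->
  strategy_proof n (mech n t k a).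
Proof.
  intros Hn Ht Hk Ha i x v Hi.
  unfold cost; rewrite !mech_eq; simpl fst; simpl snd.
  set (x' := update x i v).
  destruct (Nat.eq_dec i t) as [->|Hit].
  - rewrite Rminus_diag, Rabs_R0.
    apply Rle_trans with 0; [apply Rmin_l|].
    apply Rmin_glb; apply Rabs_pos.
  - assert (Ex : forall j, j <> i -> x' j = x j).
    { intros j Hj; unfold x', update. destruct (Nat.eqb_spec j i); congruence. }
    assert (Ext : x' i = v) by (unfold x', update; rewrite Nat.eqb_refl; reflexivity).
    rewrite (Ex t) by lia.
    unfold xl, Defs.xr.
    set (l := pmin x (n - 1)). set (r := pmax x (n - 1)).
    set (l' := pmin x' (n - 1)). set (r' := pmax x' (n - 1)).
    set (d := x t). set (y := x i).
    assert (Hly : l <= y) by (apply le_pmin; lia).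
    assert (Hyr : y <= r) by (apply le_pmax; lia).
    assert (Hld : l <= d) by (apply le_pmin; lia).
    assert (Hdr : d <= r) by (apply le_pmax; lia).
    assert (Hl'd : l' <= d) by (unfold d; rewrite <- (Ex t) by lia; apply le_pmin; lia).
    assert (Hdr' : d <= r') by (unfold d; rewrite <- (Ex t) by lia; apply le_pmax; lia).
    assert (Hc1 : 0 <= (1 - a) * k / a).
    { apply Rmult_le_pos; [|left; apply Rinv_0_lt_compat; lra]. nra. }
    assert (Hc2 : 0 <= a * k / (1 - a)).
    { apply Rmult_le_pos; [|left; apply Rinv_0_lt_compat; lra]. nra. }
    destruct (Rle_dec y d) as [Hyd|Hyd].
    + assert (Hrr : r <= r').
      { apply pmax_le; intros j Hj.
        destruct (Nat.eq_dec j i) as [->|Hji]; [fold y; lra|].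
        rewrite <- (Ex j Hji); apply le_pmax; lia. }
      apply core1; try assumption.
      * destruct (Req_dec y l) as [E|E]; [right; exact E|left].
        destruct (pmin_att x (n - 1)) as [j [Hj Ej]].
        fold l in Ej.
        assert (j <> i) by (intros ->; fold y in Ej; congruence).
        rewrite Ej, <- (Ex j) by assumption. apply le_pmin; lia.
      * intros; apply F1; assumption.
      * apply Rmult_le_compat_l; lra.
    + assert (Hll : l' <= l).
      { apply pmin_le; intros j Hj.
        destruct (Nat.eq_dec j i) as [->|Hji]; [fold y; lra|].
        rewrite <- (Ex j Hji); apply le_pmin; lia. }
      apply core2; try assumption; try lra.
      * destruct (Req_dec y r) as [E|E]; [right; exact E|left].
        destruct (pmax_att x (n - 1)) as [j [Hj Ej]].
        fold r in Ej.
        assert (j <> i) by (intros ->; fold y in Ej; congruence).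
        rewrite Ej, <- (Ex j) by assumption. apply le_pmax; lia.
      * intros; apply F2; assumption.
      * apply Rmult_le_compat_l; lra.
Qed.
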